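(* Let $k\in\mathbb{N}$, $k>1$, $z\in\mathbb{Z}$ and $l,t\in\mathbb{Z}[1/k]$. Then the following are equivalent: (1) $l\cdot z=t$; (2) for every $n\in\mathbb{Z}$, $l\cdot(k^{nz}-1)\equiv t\cdot(k^n-1)\pmod{(k^n-1)^2}$ in the ring $\mathbb{Z}[1/k]$.
   Context: $\mathbb{Z}[1/k]=\{zk^i: z,i\in\mathbb{Z}\}\subseteq\mathbb{Q}$. *)

(* Defs.v *)
(* Z[1/k] is realised as a subset of rat. *)
From mathcomp Require Import all_boot all_order all_algebra.
Set Implicit Arguments. Unset Strict Implicit. Unset Printing Implicit Defensive.
Import Order.TTheory GRing.Theory Num.Theory.
Local Open Scope ring_scope.

Definition in_Zk (k : nat) (x : rat) : Prop :=
  exists (a i : int), x = a%:~R * (k%:R : rat) ^ i.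

Definition congr_Zk (k : nat) (a b m : rat) : Prop :=
  exists c : rat, in_Zk k c /\ a - b = m * c.

(* Main.v *)
Require Import Defs.
From mathcomp Require Import all_boot all_order all_algebra.
From mathcomp Require Import ring zify.
Import Order.TTheory GRing.Theory Num.Theory.
Local Open Scope ring_scope.

Section S.
Variable k : nat.
Hypothesis hk : (1 < k)%N.
Local Notation K := (k%:R : rat).

Definition Zk (x : rat) := exists (N : nat) (m : int), x * K ^+ N = m%:~R.

Lemma K_neq0 : K != 0.
Proof. by rewrite pnatr_eq0 -lt0n ltnW. Qed.

Lemma ZkE x : in_Zk k x <-> Zk x.
Proof.
split.
  case=> a [] [] i ->.
  - exists 0%N, (a * (k ^ i)%N%:Z); rewrite expr0 mulr1 intrM /=.
    by rewrite -exprnP -natrX.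
  - exists i.+1, a; rewrite /exprz -mulrA mulVf ?mulr1 //.
    by rewrite expf_neq0 // K_neq0.
case=> N [m hm]; exists m, (- N%:Z).
by rewrite -hm -exprnN mulrK // unitfE expf_neq0 // K_neq0.
Qed.

Lemma Zk_int (m : int) : Zk m%:~R.
Proof. by exists 0%N, m; rewrite mulr1. Qed.

Lemma Zk_expz (i : int) : Zk (K ^ i).
Proof. by apply/ZkE; exists 1, i; rewrite mul1r. Qed.

Lemma Zk_add x y : Zk x -> Zk y -> Zk (x + y).
Proof.
case=> N [m hm] [M [p hp]]; exists (N + M)%N, (m * (k ^ M)%N%:Z + p * (k ^ N)%N%:Z).
rewrite exprD mulrDl mulrA hm [K ^+ N * _]mulrC mulrA hp rmorphD /= !intrM /=.
by rewrite -!natrX.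
Qed.

Lemma Zk_mul x y : Zk x -> Zk y -> Zk (x * y).
Proof.
case=> N [m hm] [M [p hp]]; exists (N + M)%N, (m * p).
by rewrite exprD intrM -hm -hp; ring.
Qed.

Lemma Zk_opp x : Zk x -> Zk (- x).
Proof. by case=> N [m hm]; exists N, (- m); rewrite mulNr hm rmorphN. Qed.

Lemma Zk_sub x y : Zk x -> Zk y -> Zk (x - y).
Proof. by move=> hx hy; apply: Zk_add => //; apply: Zk_opp. Qed.

Lemma geo_nat q : Zk q -> forall m : nat, exists G, Zk G /\ q ^+ m - 1 = (q - 1) * G.
Proof.
move=> hq; elim=> [|m [G [hG e]]].
  by exists 0; split; [exact: (Zk_int 0) | rewrite expr0 subrr mulr0].
exists (G + q ^+ m); split.
  apply: Zk_add => //; elim: m {e} => [|m ih]; first by rewrite expr0; exact: (Zk_int 1).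
  by rewrite exprS; apply: Zk_mul.
by rewrite exprS mulrDr -e; ring.
Qed.

Lemma sq_nat q : Zk q -> forall m : nat,
  exists P, Zk P /\ q ^+ m - 1 - m%:R * (q - 1) = (q - 1) ^+ 2 * P.
Proof.
move=> hq; elim=> [|m [P [hP e]]].
  by exists 0; split; [exact: (Zk_int 0) | rewrite expr0 subrr mul0r subrr mulr0].
have [G [hG eG]] := geo_nat _ hq m.
exists (P + G); split; first exact: Zk_add.
have -> : q ^+ m.+1 - 1 - m.+1%:R * (q - 1) = (q ^+ m - 1 - m%:R * (q - 1)) + (q - 1) * (q ^+ m - 1).
  rewrite exprS -addn1 natrD; ring.
by rewrite e eG; ring.
Qed.

Lemma sq_int q : q != 0 -> Zk q -> Zk q^-1 -> forall z : int,
  exists P, Zk P /\ q ^ z - 1 - z%:~R * (q - 1) = (q - 1) ^+ 2 * P.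
Proof.
move=> q0 hq hr [] m; first exact: sq_nat.
have [S [hS e]] := sq_nat _ hr m.+1.
exists (q^-1 ^+ 2 * S + m.+1%:R * q^-1); split.
  apply: Zk_add; first by apply: Zk_mul => //; rewrite expr2; apply: Zk_mul.
  by apply: Zk_mul => //; exact: (Zk_int m.+1).
have -> : q ^ Negz m = q^-1 ^+ m.+1 by rewrite /exprz exprVn.
rewrite NegzE rmorphN /=.
have -> : q^-1 ^+ m.+1 - 1 - - (m.+1%:~R) * (q - 1)
   = (q^-1 ^+ m.+1 - 1 - m.+1%:R * (q^-1 - 1)) + m.+1%:R * ((q^-1 - 1) + (q - 1)).
  rewrite -[(m.+1)%:~R]/(m.+1%:R); ring.
rewrite e.
have h1 : q^-1 - 1 = - (q - 1) * q^-1 by field.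
have h2 : (q^-1 - 1) + (q - 1) = (q - 1) ^+ 2 * q^-1.
  by field.
by rewrite h2 h1; ring.
Qed.


Lemma cop_k N : (0 < N)%N -> coprime (k ^ N - 1) k.
Proof.
move=> N0; rewrite /coprime -dvdn1; set g := gcdn _ _.
have k1 : (1 <= k ^ N)%N by rewrite expn_gt0 ltnW.
have e1 : (k ^ N - (k ^ N - 1) = 1)%N by rewrite subKn.
rewrite -e1.
apply: dvdn_sub; last exact: dvdn_gcdl.
by apply: dvdn_exp => //; exact: dvdn_gcdr.
Qed.

Lemma zero_of_div d : Zk d ->
  (forall N : nat, (0 < N)%N -> exists e, Zk e /\ d = (K ^+ N - 1) * e) -> d = 0.
Proof.
case=> A [m hm] H.
have [e [[B [a ha]] de]] := H `|m|.+1 isT.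
set N := `|m|.+1 in de.
have eX j : (((k ^ j)%N)%:Z)%:~R = K ^+ j by rewrite -natrX.
have k1 : (1 <= k ^ N)%N by rewrite expn_gt0 ltnW.
have eq : m * (k ^ B)%N%:Z = ((k ^ N)%N%:Z - 1) * a * (k ^ A)%N%:Z.
  apply: (@intr_inj rat).
  rewrite !intrM rmorphB /= !eX -hm -ha de /=; ring.
have hnat : (`|m| * k ^ B = (k ^ N - 1) * `|a| * k ^ A)%N.
  have := congr1 absz eq; rewrite !abszM !absz_nat subzn // absz_nat.
have dv : (k ^ N - 1 %| `|m|)%N.
  rewrite -(Gauss_dvdl _ (coprimeXr B (cop_k N isT))) hnat -mulnA.
  exact: dvdn_mulr.
have lt : (`|m| < k ^ N - 1)%N.
  have := ltn_expl N hk; rewrite /N; lia.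
have m0 : m = 0.
  apply/eqP; rewrite -absz_eq0; apply/negPn/negP => mn0.
  have := dvdn_leq _ dv; rewrite lt0n mn0 => /(_ isT).
  by rewrite leqNgt lt.
move: hm; rewrite m0 mulr0z => /eqP; rewrite mulf_eq0 expf_eq0 (negPf K_neq0) andbF orbF.
by move/eqP.
Qed.

End S.

Theorem corollary3p2 (k : nat) (hk : (1 < k)%N) (z : int) (l t : rat)
  (hl : in_Zk k l) (ht : in_Zk k t) :
  l * z%:~R = t <->
  (forall n : int,
     congr_Zk k (l * ((k%:R : rat) ^ (n * z) - 1))
                (t * ((k%:R : rat) ^ n - 1))
                (((k%:R : rat) ^ n - 1) ^+ 2)).
Proof.
have K0 := K_neq0 k hk.
move/(ZkE k hk): hl => hl; move/(ZkE k hk): ht => ht.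
split.
  move=> <- n.
  have [P [hP e]] := sq_int k _ (expfz_neq0 n K0) (Zk_expz k hk n)
    (eq_ind _ (fun x => Zk k x) (Zk_expz k hk (- n)) _ (esym (invr_expz _ n))) z.
  exists (l * P); split; first by apply/(ZkE k hk); apply: Zk_mul.
  rewrite -exprz_exp.
  have -> : l * ((k%:R ^ n) ^ z - 1) - l * z%:~R * (k%:R ^ n - 1)
     = l * ((k%:R ^ n) ^ z - 1 - z%:~R * (k%:R ^ n - 1)) by ring.
  rewrite e; ring.
move=> H; apply/eqP; rewrite -subr_eq0; apply/eqP.
apply: (zero_of_div k hk); first by apply: Zk_sub => //; apply: Zk_mul => //; exact: Zk_int.
move=> N N0.
have [c [/(ZkE k hk) hc ec]] := H (Posz N).
set q : rat := k%:R ^+ N.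
have hq : Zk k q := Zk_expz k hk N.
have hr : Zk k q^-1.
  by rewrite /q exprnN; exact: (Zk_expz k hk).
have q0 : q != 0 by rewrite expf_neq0.
have [P [hP e]] := sq_int k q q0 hq hr z.
exists (c - l * P); split; first by apply: Zk_sub => //; apply: Zk_mul.
have q1 : q - 1 != 0.
  rewrite subr_eq0 gt_eqF // /q exprn_egt1 -?lt0n // ltr1n //.
apply: (mulfI q1).
rewrite -exprz_exp in ec.
have -> : (q - 1) * (l * z%:~R - t)
   = (l * (q ^ z - 1) - t * (q - 1)) - l * (q ^ z - 1 - z%:~R * (q - 1)) by ring.
rewrite e.
change (l * (q ^ z - 1) - t * (q - 1) = (q - 1) ^+ 2 * c) in ec.
rewrite ec; ring.
Qed.
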